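(* For every $n\ge 1$, the Jonquières group $\mathcal{B}_n$ is solvable of derived length $n+1$.
   Context: $\mathcal{B}_n=\{f=(f_1,\dots,f_n)\in\mathrm{Aut}(\mathbb{A}^n_{\mathbb{C}}): f_i=a_ix_i+p_i,\ a_i\in\mathbb{C}^*,\ p_i\in\mathbb{C}[x_{i+1},\dots,x_n]\}$. For a group $G$, $D^0(G)=G$, $D^{k}(G)$ is the subgroup generated by commutators of $D^{k-1}(G)$; the derived length is the least $k$ with $D^k(G)=\{1\}$. *)

(* Defs.v *)
From mathcomp Require Import all_boot all_algebra.
From mathcomp Require Import Rstruct.
From mathcomp Require Import complex.
From mathcomp Require Import mpoly.

Set Implicit Arguments. Unset Strict Implicit. Unset Printing Implicit Defensive.
Import GRing.Theory Num.Theory.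
Local Open Scope ring_scope.

Definition C : numClosedFieldType := (Rdefinitions.R)[i].

(* A polynomial endomorphism f = (f_1,...,f_n) of A^n_C; the variable x_{i+1}
   is 'X_i for i : 'I_n (0-based indexing). *)
Definition polymap (n : nat) := n.-tuple {mpoly C[n]}.

Definition pm_id (n : nat) : polymap n := [tuple ('X_i : {mpoly C[n]}) | i < n].

(* Composition of maps: (pm_comp f g) = f o g, i.e. its i-th component is
   f_i(g_1,...,g_n). *)
Definition pm_comp (n : nat) (f g : polymap n) : polymap n :=
  [tuple comp_mpoly g (tnth f i) | i < n].

Definition pm_inv (n : nat) (f g : polymap n) : Prop :=
  pm_comp f g = pm_id n /\ pm_comp g f = pm_id n.

Definition is_aut (n : nat) (f : polymap n) : Prop := exists g, pm_inv f g.

(* p only involves the variables x_j with j > i+1 (0-based: indices > i),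
   i.e. p \in C[x_{i+1},...,x_n] in the paper's 1-based notation. *)
Definition only_vars_after (n : nat) (i : 'I_n) (p : {mpoly C[n]}) : Prop :=
  forall m : 'X_{1..n}, m \in msupp p -> forall j : 'I_n, (m j != 0)%N -> (i < j)%N.

Definition Jonq (n : nat) (f : polymap n) : Prop :=
  is_aut f /\
  forall i : 'I_n, exists a : C, a != 0 /\
    exists p : {mpoly C[n]}, only_vars_after i p /\ tnth f i = a *: 'X_i + p.

Inductive gen_subgroup (n : nat) (S : polymap n -> Prop) : polymap n -> Prop :=
| gen_in f : S f -> gen_subgroup S f
| gen_one : gen_subgroup S (pm_id n)
| gen_mul f g : gen_subgroup S f -> gen_subgroup S g -> gen_subgroup S (pm_comp f g)
| gen_inv f g : gen_subgroup S f -> pm_inv f g -> gen_subgroup S g.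

Definition commutators (n : nat) (S : polymap n -> Prop) (h : polymap n) : Prop :=
  exists f g f' g', [/\ S f, S g, pm_inv f f', pm_inv g g' &
    h = pm_comp (pm_comp f' g') (pm_comp f g)].

Fixpoint derived (n : nat) (G : polymap n -> Prop) (k : nat) : polymap n -> Prop :=
  match k with
  | 0 => G
  | k.+1 => gen_subgroup (commutators (derived G k))
  end.

Definition trivial_set (n : nat) (S : polymap n -> Prop) : Prop :=
  forall f, S f <-> f = pm_id n.

Definition solvable_grp (n : nat) (G : polymap n -> Prop) : Prop :=
  exists k, trivial_set (derived G k).

Definition derived_length_is (n : nat) (G : polymap n -> Prop) (k : nat) : Prop :=
  trivial_set (derived G k) /\ forall j, (j < k)%N -> ~ trivial_set (derived G j).

(* Main.v *)
Require Import Defs.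
From mathcomp Require Import all_boot all_algebra.
From mathcomp Require Import Rstruct complex mpoly zify ring.
Set Implicit Arguments. Unset Strict Implicit. Unset Printing Implicit Defensive.
Import GRing.Theory Num.Theory.
Local Open Scope ring_scope.

Definition uses {n : nat} (P : pred 'I_n) (p : {mpoly C[n]}) : Prop :=
  forall m : 'X_{1..n}, m \in msupp p -> forall j : 'I_n, (m j != 0)%N -> P j.

Lemma uses0 n (P : pred 'I_n) : uses P 0.
Proof. by move=> m; rewrite msupp0. Qed.

Lemma usesC n (P : pred 'I_n) c : uses P c%:MP.
Proof. move=> m; rewrite msuppC; case: eqP => // _; rewrite inE => /eqP -> j; by rewrite mnm0E. Qed.

Lemma uses1 n (P : pred 'I_n) : uses P 1.
Proof. exact: usesC. Qed.

Lemma usesD n (P : pred 'I_n) p q : uses P p -> uses P q -> uses P (p + q).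
Proof. move=> hp hq m /msuppD_le; rewrite mem_cat => /orP [/hp|/hq] //. Qed.

Lemma usesN n (P : pred 'I_n) p : uses P p -> uses P (- p).
Proof. move=> hp m; rewrite (perm_mem (msuppN p)); exact: hp. Qed.

Lemma usesB n (P : pred 'I_n) p q : uses P p -> uses P q -> uses P (p - q).
Proof. by move=> hp hq; apply: usesD => //; apply: usesN. Qed.

Lemma usesZ n (P : pred 'I_n) c p : uses P p -> uses P (c *: p).
Proof. move=> hp m /msuppZ_le; exact: hp. Qed.

Lemma usesM n (P : pred 'I_n) p q : uses P p -> uses P q -> uses P (p * q).
Proof.
move=> hp hq m /msuppM_le /allpairsP [[m1 m2] /= [h1 h2 ->]] j.
rewrite mnmDE; case: (boolP (m1 j != 0)%N) => [/(hp _ h1)//|].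
by rewrite negbK => /eqP ->; rewrite add0n; apply: hq.
Qed.

Lemma usesX n (P : pred 'I_n) (j : 'I_n) : P j -> uses P 'X_j.
Proof.
move=> Pj m; rewrite msuppX inE => /eqP -> l; rewrite mnm1E.
by case: (j =P l) => // <-.
Qed.

Lemma usesXn n (P : pred 'I_n) p k : uses P p -> uses P (p ^+ k).
Proof.
move=> hp; elim: k => [|k ih]; first by rewrite expr0; apply: uses1.
by rewrite exprS; apply: usesM.
Qed.

Lemma uses_sum n (P : pred 'I_n) (T : Type) (r : seq T) (F : T -> {mpoly C[n]}) :
  (forall x, uses P (F x)) -> uses P (\sum_(x <- r) F x).
Proof. move=> h; elim/big_ind: _ => //; [exact: uses0| exact: usesD]. Qed.

Lemma uses_prod n (P : pred 'I_n) (T : Type) (r : seq T) (F : T -> {mpoly C[n]}) :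
  (forall x, uses P (F x)) -> uses P (\prod_(x <- r) F x).
Proof. move=> h; elim/big_ind: _ => //; [exact: uses1| exact: usesM]. Qed.

Lemma uses_mono n (P Q : pred 'I_n) p : (forall j, P j -> Q j) -> uses P p -> uses Q p.
Proof. by move=> hPQ hp m hm j hj; apply: hPQ; apply: hp hm j hj. Qed.

Lemma uses_comp n (P Q : pred 'I_n) p (g : polymap n) :
  uses P p -> (forall l, P l -> uses Q (tnth g l)) -> uses Q (comp_mpoly g p).
Proof.
move=> hp hg; rewrite comp_mpolyE; apply: uses_sum => m.
case: (boolP (m \in msupp p)) => hm; last by rewrite (memN_msupp_eq0 hm) scale0r; apply: uses0.
apply: usesZ; apply: uses_prod => i.
case: (boolP (m i != 0)%N) => hi; first by apply: usesXn; apply: hg; apply: hp hm i hi.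
by rewrite negbK in hi; rewrite (eqP hi) expr0; apply: uses1.
Qed.

Lemma uses_fix n (P : pred 'I_n) p (g : polymap n) :
  uses P p -> (forall l, P l -> tnth g l = 'X_l) -> comp_mpoly g p = p.
Proof.
move=> hp hg; rewrite -[RHS](comp_mpoly_id p) !comp_mpolyE.
apply: eq_big_seq => m hm; congr (_ *: _); apply: eq_bigr => i _.
case: (boolP (m i != 0)%N) => hi; first by rewrite hg ?tnth_mktuple //; apply: hp hm i hi.
by rewrite negbK in hi; rewrite (eqP hi) !expr0.
Qed.

Lemma uses_coef n (i : 'I_n) p : uses (fun j => (i < j)%N) p -> p@_(U_(i)%MM) = 0.
Proof.
move=> hp; apply/eqP; rewrite mcoeff_eq0; apply/negP => /hp /(_ i).
by rewrite mnm1E eqxx ltnn => /(_ isT).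
Qed.

Lemma tnth_comp n (f g : polymap n) i : tnth (pm_comp f g) i = comp_mpoly g (tnth f i).
Proof. by rewrite /pm_comp tnth_mktuple. Qed.

Lemma tnth_id n (i : 'I_n) : tnth (pm_id n) i = 'X_i.
Proof. by rewrite /pm_id tnth_mktuple. Qed.

Lemma compX n (g : polymap n) (i : 'I_n) : comp_mpoly g 'X_i = tnth g i.
Proof. by rewrite comp_mpolyXU (tnth_nth 0). Qed.

Lemma pm_id_comp n (g : polymap n) : pm_comp (pm_id n) g = g.
Proof. by apply: eq_from_tnth => i; rewrite tnth_comp tnth_id compX. Qed.

Lemma pm_comp_id n (f : polymap n) : pm_comp f (pm_id n) = f.
Proof. by apply: eq_from_tnth => i; rewrite tnth_comp comp_mpoly_id. Qed.

Definition TriI n (f : polymap n) (i : 'I_n) (a : C) :=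
  uses (fun j : 'I_n => (i < j)%N) (tnth f i - a *: 'X_i).

Definition Wk n (g : polymap n) := forall j : 'I_n, uses (fun l : 'I_n => (j <= l)%N) (tnth g j).

Lemma Wk_of n (f : polymap n) : (forall i, exists a, TriI f i a) -> Wk f.
Proof.
move=> h j; have [a ha] := h j.
have -> : tnth f j = (tnth f j - a *: 'X_j) + a *: 'X_j by rewrite subrK.
apply: usesD; first by apply: uses_mono ha => l /ltnW.
by apply: usesZ; apply: usesX.
Qed.

Lemma comp_TriI n (f g : polymap n) i a b :
  Wk g -> TriI f i a -> TriI g i b -> TriI (pm_comp f g) i (a * b).
Proof.
move=> wg hf hg; rewrite /TriI tnth_comp.
have -> : tnth f i = (tnth f i - a *: 'X_i) + a *: 'X_i by rewrite subrK.
rewrite comp_mpolyD comp_mpolyZ compX.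
have -> : comp_mpoly g (tnth f i - a *: 'X_i) + a *: tnth g i - (a * b) *: 'X_i =
  comp_mpoly g (tnth f i - a *: 'X_i) + a *: (tnth g i - b *: 'X_i).
  by rewrite scalerBr scalerA addrA.
apply: usesD; last by apply: usesZ.
apply: uses_comp hf _ => l hl; apply: uses_mono (wg l) => j; exact: leq_trans.
Qed.

Lemma TriI_coef n (f : polymap n) i a : TriI f i a -> (tnth f i)@_(U_(i)%MM) = a.
Proof.
move=> /uses_coef; rewrite mcoeffB mcoeffZ mcoeffXU eqxx mulr1 => /eqP.
by rewrite subr_eq0 => /eqP.
Qed.

Lemma TriI_uniq n (f : polymap n) i a b : TriI f i a -> TriI f i b -> a = b.
Proof. by move=> /TriI_coef <- /TriI_coef. Qed.

Lemma strong_down n (P : 'I_n -> Prop) :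
  (forall i : 'I_n, (forall j : 'I_n, (i < j)%N -> P j) -> P i) -> forall i, P i.
Proof.
move=> h.
have : forall k (i : 'I_n), (n - i <= k)%N -> P i.
  elim=> [|k ih] i hi.
    by move: hi; rewrite leqn0 subn_eq0 leqNgt ltn_ord.
  apply: h => j hj; apply: ih.
  move: hi hj; rewrite !leq_subLR; lia.
by move=> hk i; apply: (hk (n - i)%N).
Qed.

Lemma inv_TriI n (f g : polymap n) :
  (forall i, exists a, a != 0 /\ TriI f i a) -> pm_comp f g = pm_id n ->
  forall i a, a != 0 -> TriI f i a -> TriI g i a^-1.
Proof.
move=> hall hfg; apply: strong_down => i ih a a0 ha.
have wg : forall j : 'I_n, (i < j)%N -> uses (fun l : 'I_n => (i < l)%N) (tnth g j).
  move=> j hj; have [b [b0 hb]] := hall j.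
  have hgj := ih j hj b b0 hb.
  have -> : tnth g j = (tnth g j - b^-1 *: 'X_j) + b^-1 *: 'X_j by rewrite subrK.
  apply: usesD; first by apply: uses_mono hgj => l /(ltn_trans hj).
  by apply: usesZ; apply: usesX.
have e : comp_mpoly g (tnth f i) = 'X_i by rewrite -tnth_comp hfg tnth_id.
move: e; have -> : tnth f i = (tnth f i - a *: 'X_i) + a *: 'X_i by rewrite subrK.
rewrite comp_mpolyD comp_mpolyZ compX => e.
rewrite /TriI; have -> : tnth g i - a^-1 *: 'X_i = - a^-1 *: comp_mpoly g (tnth f i - a *: 'X_i).
  apply: (scalerI a0); rewrite scalerBr !scalerA mulrN mulfV // scaleN1r.
  move: e; set P := comp_mpoly g (tnth f i - a *: 'X_i) => e.
  by rewrite scale1r -e opprD addrC -addrA addNr addr0.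
first [apply: usesZ | apply: usesN; apply: usesZ]; apply: uses_comp ha _ => l hl; exact: wg.
Qed.

Definition Lev n (k : nat) (f : polymap n) :=
  (forall i, TriI f i 1) /\ forall i : 'I_n, (n < i + k)%N -> tnth f i = 'X_i.

Lemma Wk_Lev n k (f : polymap n) : Lev k f -> Wk f.
Proof. by case=> h _; apply: Wk_of => i; exists 1. Qed.

Lemma Lev_comp n k (f g : polymap n) : Lev k f -> Lev k g -> Lev k (pm_comp f g).
Proof.
move=> hf hg; split.
  by move=> i; rewrite -[1 : C]mulr1; apply: comp_TriI (Wk_Lev hg) (hf.1 i) (hg.1 i).
by move=> i hi; rewrite tnth_comp hf.2 // compX hg.2.
Qed.

Lemma Lev_inv n k (f g : polymap n) : Lev k f -> pm_comp f g = pm_id n -> Lev k g.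
Proof.
move=> hf hfg; split.
  move=> i; rewrite -invr1; apply: (inv_TriI _ hfg); last exact: hf.1.
    by move=> j; exists 1; split; [exact: oner_neq0| exact: hf.1].
  exact: oner_neq0.
move=> i hi; rewrite -compX -{1}(hf.2 i hi) -tnth_comp hfg tnth_id //.
Qed.

Lemma Lev_id n k : Lev k (pm_id n).
Proof.
split=> [i|i _]; last by rewrite tnth_id.
by rewrite /TriI tnth_id scale1r subrr; apply: uses0.
Qed.

Lemma add_lemma n (i : 'I_n) (h l : polymap n) :
  TriI h i 1 -> (forall j : 'I_n, (i < j)%N -> tnth l j = 'X_j) ->
  tnth (pm_comp h l) i = (tnth h i - 'X_i) + tnth l i.
Proof.
move=> hh hl; rewrite tnth_comp.
have hu : uses (fun j : 'I_n => (i < j)%N) (tnth h i - 'X_i) by move: hh; rewrite /TriI scale1r.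
have e : tnth h i = (tnth h i - 'X_i) + 'X_i by rewrite subrK.
by rewrite {1}e comp_mpolyD compX (uses_fix hu hl).
Qed.

Lemma alg1 (R : comRingType) (F F' G G' X : R) :
  X = F - X + F' -> X = G - X + G' -> (F' - X + G') - X + (F - X + G) = X.
Proof.
move=> e1 e2.
have -> : F' = X - (F - X) by rewrite {1}e1 addrC addKr.
have -> : G' = X - (G - X) by rewrite {1}e2 addrC addKr.
ring.
Qed.

Lemma alg2 (R : comRingType) (P Q F F' G G' X : R) :
  P = F' - X + G' -> Q = F - X + G ->
  X = F - X + F' -> X = G - X + G' -> P - X + Q = X.
Proof. by move=> -> ->; apply: alg1. Qed.

Lemma Lev_commut n k (f g f' g' : polymap n) : (1 <= k)%N ->
  Lev k f -> Lev k g -> pm_inv f f' -> pm_inv g g' ->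
  Lev k.+1 (pm_comp (pm_comp f' g') (pm_comp f g)).
Proof.
move=> k1 hf hg [hff' _] [hgg' _].
have hf' := Lev_inv hf hff'; have hg' := Lev_inv hg hgg'.
have hall := Lev_comp (Lev_comp hf' hg') (Lev_comp hf hg).
split; first exact: hall.1.
move=> i hi; case: (ltnP n (i + k)) => hik; first exact: hall.2.
have eik : (i + k)%N = n by apply/eqP; rewrite eqn_leq hik; rewrite addnS in hi.
have fx : forall h : polymap n, Lev k h -> forall j : 'I_n, (i < j)%N -> tnth h j = 'X_j.
  by move=> h hh j hj; apply: hh.2; rewrite -[X in (X < _)%N]eik ltn_add2r.
have A : forall h l, Lev k h -> Lev k l ->
    tnth (pm_comp h l) i = (tnth h i - 'X_i) + tnth l i.
  by move=> h l hh hl; apply: add_lemma (hh.1 i) (fx l hl).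
have B := A _ _ (Lev_comp hf' hg') (Lev_comp hf hg).
have B1 := A _ _ hf' hg'.
have B2 := A _ _ hf hg.
have e1 := A _ _ hf hf'; rewrite hff' tnth_id in e1.
have e2 := A _ _ hg hg'; rewrite hgg' tnth_id in e2.
apply: etrans B _.
exact: alg2 B1 B2 e1 e2.
Qed.

Definition Tall n (f : polymap n) := forall j, exists a, a != 0 /\ TriI f j a.

Lemma Wk_Tall n (f : polymap n) : Tall f -> Wk f.
Proof. by move=> h; apply: Wk_of => j; have [a [_ ha]] := h j; exists a. Qed.

Lemma Tall_comp n (f g : polymap n) : Tall f -> Tall g -> Tall (pm_comp f g).
Proof.
move=> hf hg j; have [a [a0 ha]] := hf j; have [b [b0 hb]] := hg j.
by exists (a * b); split; [exact: mulf_neq0 | exact: comp_TriI (Wk_Tall hg) ha hb].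
Qed.

Lemma Tall_inv n (f g : polymap n) : Tall f -> pm_comp f g = pm_id n -> Tall g.
Proof.
move=> hf hfg j; have [a [a0 ha]] := hf j.
exists a^-1; split; first by rewrite invr_eq0.
by have := inv_TriI hf hfg a0 ha.
Qed.

Lemma Jonq_Tall n (f : polymap n) : Jonq f -> Tall f.
Proof.
move=> [_ h] i; have [a [a0 [p [hp e]]]] := h i.
by exists a; split => //; rewrite /TriI e [a *: _ + _]addrC addrK.
Qed.

Lemma Jonq_commut n (f g f' g' : polymap n) :
  Jonq f -> Jonq g -> pm_inv f f' -> pm_inv g g' ->
  Lev 1 (pm_comp (pm_comp f' g') (pm_comp f g)).
Proof.
move=> /Jonq_Tall hf /Jonq_Tall hg [hff' _] [hgg' _]; split; last first.
  by move=> i; rewrite addn1 ltnNge ltn_ord.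
move=> i.
have hf' := Tall_inv hf hff'; have hg' := Tall_inv hg hgg'.
have [a [a0 ha]] := hf i; have [b [b0 hb]] := hg i.
have ha' := inv_TriI hf hff' a0 ha; have hb' := inv_TriI hg hgg' b0 hb.
have -> : (1 : C) = (a^-1 * b^-1) * (a * b).
  by rewrite mulrACA mulVf // mulVf // mulr1.
apply: comp_TriI; first exact: Wk_Tall (Tall_comp hf hg).
  exact: comp_TriI (Wk_Tall hg') ha' hb'.
exact: comp_TriI (Wk_Tall hg) ha hb.
Qed.

Lemma gen_Lev n k (S : polymap n -> Prop) :
  (forall h, S h -> Lev k h) -> forall f, gen_subgroup S f -> Lev k f.
Proof.
move=> hS f; elim=> {f}.
- by move=> f /hS.
- exact: Lev_id.
- by move=> f g _ hf _ hg; apply: Lev_comp.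
- by move=> f g _ hf [hfg _]; apply: Lev_inv hf hfg.
Qed.

Lemma upper n k (f : polymap n) : derived (@Jonq n) k.+1 f -> Lev k.+1 f.
Proof.
elim: k f => [|k ih] f.
  apply: gen_Lev => h [f1 [g1 [f1' [g1' [hf hg hf' hg' ->]]]]].
  exact: Jonq_commut.
apply: gen_Lev => h [f1 [g1 [f1' [g1' [hf hg hf' hg' ->]]]]].
by apply: Lev_commut => //; apply: ih.
Qed.

Lemma Lev_top n (f : polymap n) : Lev n.+1 f -> f = pm_id n.
Proof.
move=> [_ h]; apply: eq_from_tnth => i; rewrite tnth_id; apply: h.
by rewrite addnS ltnS leq_addl.
Qed.

Lemma comp_comp n (f g : polymap n) p :
  comp_mpoly (pm_comp f g) p = comp_mpoly g (comp_mpoly f p).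
Proof.
rewrite (comp_mpolyE p f) raddf_sum comp_mpolyE /=; apply: eq_bigr => m _.
rewrite comp_mpolyZ rmorph_prod; congr (_ *: _); apply: eq_bigr => i _.
by rewrite rmorphXn tnth_comp.
Qed.

Definition F n (i : 'I_n) (a : C) (q : {mpoly C[n]}) : polymap n :=
  [tuple if j == i then a *: 'X_i + q else 'X_j | j < n].

Lemma tnth_F n (i : 'I_n) a q j :
  tnth (F i a q) j = if j == i then a *: 'X_i + q else 'X_j.
Proof. by rewrite /F tnth_mktuple. Qed.

Lemma compF_X n (i : 'I_n) a q j :
  comp_mpoly (F i a q) 'X_j = if j == i then a *: 'X_i + q else 'X_j.
Proof. by rewrite compX tnth_F. Qed.

Lemma compF_fix n (i : 'I_n) a q p (P : pred 'I_n) :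
  uses P p -> (forall l, P l -> l != i) -> comp_mpoly (F i a q) p = p.
Proof.
move=> hp hP; apply: uses_fix hp _ => l /hP hl.
by rewrite tnth_F (negbTE hl).
Qed.

Lemma F_comp n (i : 'I_n) a b q r :
  uses (fun l : 'I_n => (i < l)%N) q ->
  pm_comp (F i a q) (F i b r) = F i (a * b) (a *: r + q).
Proof.
move=> hq; apply: eq_from_tnth => j; rewrite tnth_comp !tnth_F.
case: (j =P i) => [_|hj]; last by rewrite compF_X (introF eqP hj).
rewrite comp_mpolyD comp_mpolyZ compF_X eqxx.
rewrite (compF_fix b r hq); last by move=> l hl; rewrite neq_ltn hl orbT.
by rewrite scalerDr scalerA addrA.
Qed.

Lemma F_id n (i : 'I_n) : F i 1 0 = pm_id n.
Proof.
apply: eq_from_tnth => j; rewrite tnth_F tnth_id.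
by case: (j =P i) => [->|]; rewrite ?scale1r ?addr0.
Qed.

Lemma F_inv n (i : 'I_n) a q :
  a != 0 -> uses (fun l : 'I_n => (i < l)%N) q ->
  pm_inv (F i a q) (F i a^-1 (- (a^-1 *: q))).
Proof.
move=> a0 hq; split.
  by rewrite F_comp // mulfV // scalerN scalerKV // addNr F_id.
rewrite F_comp; last by apply: usesN; apply: usesZ.
by rewrite mulVf // addrN F_id.
Qed.

Lemma F_Jonq n (i : 'I_n) a q :
  a != 0 -> uses (fun l : 'I_n => (i < l)%N) q -> Jonq (F i a q).
Proof.
move=> a0 hq; split; first by exists (F i a^-1 (- (a^-1 *: q))); apply: F_inv.
move=> j; rewrite tnth_F; case: (j =P i) => [->|_].
  by exists a; split => //; exists q.
exists 1; split; first exact: oner_neq0.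
by exists 0; split; [exact: uses0 | rewrite scale1r addr0].
Qed.

Lemma F_inv1 n (i : 'I_n) q :
  uses (fun l : 'I_n => (i < l)%N) q -> pm_inv (F i 1 q) (F i 1 (- q)).
Proof. by move=> hq; have := F_inv (oner_neq0 C) hq; rewrite invr1 scale1r. Qed.

Lemma base n (i : 'I_n) q :
  uses (fun l : 'I_n => (i < l)%N) q -> derived (@Jonq n) 1 (F i 1 q).
Proof.
move=> hq; have two0 : (2 : C) != 0 by rewrite pnatr_eq0.
have hq2 : uses (fun l : 'I_n => (i < l)%N) (2 *: q) by apply: usesZ.
have h0 : uses (fun l : 'I_n => (i < l)%N) 0 by apply: uses0.
apply: gen_in.
exists (F i 2 0), (F i 1 (2 *: q)), (F i 2^-1 0), (F i 1 (- (2 *: q))); split.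
- by apply: F_Jonq.
- by apply: F_Jonq => //; exact: oner_neq0.
- by have := F_inv two0 h0; rewrite scaler0 oppr0.
- exact: F_inv1.
rewrite F_comp // F_comp // F_comp; last by apply: usesD => //; apply: usesZ; apply: usesN.
congr F; first by rewrite !mulr1 mulVf.
by rewrite !addr0 !mulr1 scalerN !scalerA mulVf // mul1r scale1r scaler_nat mulr2n addrK.
Qed.

Lemma uses_prodc n (P : pred 'I_n) (T : Type) (r : seq T) (Q : pred T) (G : T -> {mpoly C[n]}) :
  (forall x, Q x -> uses P (G x)) -> uses P (\prod_(x <- r | Q x) G x).
Proof. move=> h; elim/big_ind: _ => //; [exact: uses1| exact: usesM]. Qed.

Definition Pm n (i m : nat) : {mpoly C[n]} :=
  \prod_(l < n | (i < l <= i + m)%N) 'X_l.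

Lemma uses_Pm n i m : uses (fun l : 'I_n => (i < l <= i + m)%N) (Pm n i m).
Proof. by apply: uses_prodc => l hl; apply: usesX. Qed.

Lemma Pm0 n i : Pm n i 0 = 1.
Proof.
apply: big_pred0 => l; rewrite addn0; apply/negbTE.
by case: (ltnP i l).
Qed.

Lemma PmS n i m (h : (i + m.+1 < n)%N) :
  Pm n i m.+1 = 'X_(Ordinal h) * Pm n i m.
Proof.
rewrite /Pm (bigD1 (Ordinal h)) /=; last by rewrite /= leqnn andbT addnS ltnS leq_addr.
congr (_ * _); apply: eq_bigl => l.
rewrite -val_eqE /=.
case: (ltnP i l) => //= _.
rewrite addnS leq_eqVlt ltnS; case: (val l =P (i + m).+1) => [->|_] /=; [by rewrite ltnn ?eqxx ?andbF | by rewrite andbT].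
Qed.

Lemma step_comm n (i j : 'I_n) (P : {mpoly C[n]}) : (i < j)%N ->
  uses (fun l : 'I_n => (i < l)%N && (l != j)) P ->
  pm_comp (pm_comp (F i 1 (- ('X_j * P))) (F j 1 (- 1)))
          (pm_comp (F i 1 ('X_j * P)) (F j 1 1)) = F i 1 P.
Proof.
move=> hij hP.
have hPi : forall a q, comp_mpoly (F i a q) P = P.
  by move=> a q; apply: (compF_fix a q hP) => l /andP [hl _]; rewrite neq_ltn hl orbT.
have hPj : forall a q, comp_mpoly (F j a q) P = P.
  by move=> a q; apply: (compF_fix a q hP) => l /andP [_ hl].
have nij : (i == j) = false by apply/negbTE; rewrite neq_ltn hij.
have nji : (j == i) = false by rewrite eq_sym.
apply: eq_from_tnth => l; rewrite tnth_comp comp_comp tnth_comp !tnth_F.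
case: (l =P i) => [_|hli].
  do 4 rewrite ?(comp_mpolyD, comp_mpolyB, comp_mpolyN, comp_mpolyZ, rmorphM, compF_X, comp_mpoly1, hPi, hPj, eqxx, nij, nji) /=.
  by rewrite !scale1r addrK mulrDl mul1r [_ * P + P]addrC addrA addrK.
have nli : (l == i) = false by apply/negbTE/eqP.
case: (l =P j) => [->|hlj].
  do 4 rewrite ?(comp_mpolyD, comp_mpolyB, comp_mpolyN, comp_mpolyZ, rmorphM, compF_X, comp_mpoly1, hPi, hPj, eqxx, nij, nji) /=.
  by rewrite !scale1r addrK.
have nlj : (l == j) = false by apply/negbTE/eqP.
by do 3 rewrite ?compF_X ?nlj ?nli.
Qed.

Lemma lower n k : (1 <= k)%N -> forall (i : 'I_n) m, (i + m + k = n)%N ->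
  derived (@Jonq n) k (F i 1 (Pm n i m)).
Proof.
elim: k => [//|k ih] _ i m e.
case: k ih e => [|k] ih e.
  apply: base; apply: uses_mono (@uses_Pm n i m) => l /andP [] //.
have h : (i + m.+1 < n)%N.
  have h0 : (i + m.+1 < i + m + k.+2)%N by rewrite !addnS !ltnS leq_addr.
  by rewrite e in h0.
pose j := Ordinal h.
have e1 : (i + m.+1 + k.+1 = n)%N by apply: etrans _ e; rewrite !addnS !addSn.
have e2 : (j + 0 + k.+1 = n)%N by apply: etrans _ e; rewrite /= addn0 !addnS !addSn.
have IH1 := ih isT i m.+1 e1.
have IH2 := ih isT j 0 e2.
rewrite Pm0 in IH2; rewrite (PmS h) in IH1.
have hP : uses (fun l : 'I_n => (i < l)%N && (l != j)) (Pm n i m).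
  apply: uses_mono (@uses_Pm n i m) => l /andP [hl1 hl2]; rewrite hl1 /=.
  by rewrite -val_eqE /= neq_ltn addnS ltnS hl2.
have hij : (i < j)%N by rewrite /= addnS ltnS leq_addr.
have hQ : uses (fun l : 'I_n => (i < l)%N) ('X_j * Pm n i m).
  apply: usesM; first exact: usesX.
  by apply: uses_mono hP => l /andP [].
apply: gen_in.
exists (F i 1 ('X_j * Pm n i m)), (F j 1 1), (F i 1 (- ('X_j * Pm n i m))), (F j 1 (- 1)).
split => //; first exact: F_inv1.
  by apply: F_inv1; apply: uses1.
by rewrite step_comm.
Qed.

Lemma triv_next n (G : polymap n -> Prop) j :
  trivial_set (derived G j) -> trivial_set (derived G j.+1).
Proof.
move=> ht f; split; last by move=> ->; apply: gen_one.
rewrite /=; elim=> {f}.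
- move=> h [f1 [g1 [f1' [g1' [hf hg [hf' _] [hg' _] ->]]]]].
  have e1 := (ht f1).1 hf; have e2 := (ht g1).1 hg; subst f1 g1.
  rewrite pm_id_comp in hf'; rewrite pm_id_comp in hg'.
  by rewrite hf' hg' !pm_id_comp.
- by [].
- by move=> f g _ -> _ ->; rewrite pm_id_comp.
- by move=> f g _ -> [hfg _]; rewrite pm_id_comp in hfg.
Qed.

Lemma F_ne_id n (i : 'I_n) : F i 1 1 <> pm_id n.
Proof.
move=> e; have := congr1 (fun t => (tnth t i)@_(0%MM)) e; rewrite /= tnth_F tnth_id eqxx.
rewrite mcoeffD mcoeffZ !mcoeffX mcoeff1 mnm1_eq0 eqxx mulr0 add0r.
by move/eqP; rewrite oner_eq0.
Qed.

Theorem lemma3p2 (n : nat) (hn : (1 <= n)%N) :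
  solvable_grp (@Jonq n) /\ derived_length_is (@Jonq n) n.+1.
Proof.
have top : trivial_set (derived (@Jonq n) n.+1).
  move=> f; split; first by move=> /upper /Lev_top.
  by move=> ->; apply: gen_one.
split; first by exists n.+1.
split => // j hj ht.
have H : forall d, trivial_set (derived (@Jonq n) (j + d)).
  by elim=> [|d ih]; [rewrite addn0 | rewrite addnS; apply: triv_next].
have := H (n - j)%N; rewrite subnKC; last by rewrite -ltnS.
move=> htn.
have := @lower n n hn (Ordinal hn) 0 erefl; rewrite Pm0.
by move=> /(htn _).1 /F_ne_id.
Qed.
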